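(* Let $s,k$ be positive integers with $s\leq\tfrac15 k$ and let $\vec s=(s,\dots,s)\in\mathbb{Z}_+^k$. Then \[ \mathrm{LCS}_2(4,\mathcal P_{\vec s})\leq(2s^2k)^{1/3}+\tfrac53 s+s^{4/3}k^{-1/3}. \]
   Context: For $\vec s\in\mathbb{Z}_+^k$, an $\vec s$-multipermutation is a word over $\{1,\dots,k\}$ in which each letter $l$ appears exactly $s_l$ times; $\mathcal P_{\vec s}$ is the set of all of them. $\mathrm{LCS}(w,w')$ is the length of a longest common subsequence of words $w,w'$. $\mathrm{LCS}_2(t,\mathcal P_{\vec s})$ is the minimum, over all sets of $t$ distinct elements of $\mathcal P_{\vec s}$, of the maximum $\mathrm{LCS}$ of two distinct members of the set. *)

(* Defs.v *)
From mathcomp Require Import all_boot.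
From Stdlib Require Import Reals.
Set Implicit Arguments. Unset Strict Implicit. Unset Printing Implicit Defensive.

Definition is_multiperm (s : seq nat) (w : seq nat) : Prop :=
  all (fun a => (1 <= a) && (a <= size s)) w /\
  forall l, 1 <= l <= size s -> count_mem l w = nth 0 s l.-1.

Fixpoint all_masks (n : nat) : seq bitseq :=
  if n is n'.+1 then
    [seq true :: m | m <- all_masks n'] ++ [seq false :: m | m <- all_masks n']
  else [:: [::]].

Definition LCS (w w' : seq nat) : nat :=
  \max_(c <- [seq mask m w | m <- all_masks (size w)] | subseq c w') size c.

(* Main.v *)
Require Import Defs.
From Stdlib Require Import Lra.
From mathcomp Require Import all_boot.
From Stdlib Require Import Reals.
From mathcomp Require Import zify.
From Stdlib Require ZArith.
Set Implicit Arguments. Unset Strict Implicit. Unset Printing Implicit Defensive.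

Fixpoint nd {T : Type} (lt : rel T) (p : T) (s : seq T) : nat :=
  if s is x :: s' then (~~ lt p x) + nd lt x s' else 0.
Definition Dseq {T : Type} (lt : rel T) (s : seq T) : nat :=
  if s is x :: s' then nd lt x s' else 0.

Lemma nd_tri (T : Type) (lt : rel T) : transitive lt ->
  forall s p y, nd lt p s <= (~~ lt p y) + nd lt y s.
Proof.
move=> tr [|z s] p y //=.
case Hpy: (lt p y); case Hyz: (lt y z); case Hpz: (lt p z) => //=.
by rewrite (tr _ _ _ Hpy Hyz) in Hpz.
all: lia.
Qed.

Lemma nd_mono (T : eqType) (lt : rel T) : transitive lt ->
  forall w c p, subseq c w -> nd lt p c <= nd lt p w.
Proof.
move=> tr; elim=> [|y w IH] [|x c] p //=.
case: eqP => [<-|_] H; first by rewrite leq_add2l; apply: IH.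
apply: leq_trans (IH _ _ H) _; exact: nd_tri.
Qed.

Lemma Dseq_mono (T : eqType) (lt : rel T) : transitive lt ->
  forall w c, subseq c w -> Dseq lt c <= Dseq lt w.
Proof.
move=> tr; elim=> [|y w IH] [|x c] //=.
case: eqP => [<-|_] H; first exact: nd_mono.
apply: leq_trans (IH _ H) _.
case: w {IH H} => [|z w] //=; exact: leq_addl.
Qed.

Lemma Dseq_map (T T' : Type) (f : T -> T') (lt : rel T') s :
  Dseq lt (map f s) = Dseq (relpre f lt) s.
Proof.
case: s => [|x s] //=; elim: s x => [|y s IH] x //=; by rewrite IH.
Qed.

Lemma size_D2 (T : Type) (lt1 lt2 : rel T) :
  (forall u v, ~~ lt1 u v || ~~ lt2 u v) ->
  forall s, size s <= (Dseq lt1 s + Dseq lt2 s).+1.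
Proof.
move=> H [|x s] //=; elim: s x => [|y s IH] x //=.
have := IH y; have := H x y; case: (lt1 x y); case: (lt2 x y) => //= _; lia.
Qed.

Lemma size_D1 (T : Type) (r lt : rel T) :
  (forall u v, r u v -> ~~ lt u v) ->
  forall s, sorted r s -> size s <= (Dseq lt s).+1.
Proof.
move=> H [|x s] //=; elim: s x => [|y s IH] x //= /andP[rxy ps].
have := IH y ps; have := H _ _ rxy; case: (lt x y) => //= _; lia.
Qed.

Lemma path_last_le (T : Type) (g : T -> nat) p s :
  path (relpre g leq) p s -> g p <= g (last p s).
Proof.
elim: s p => [|y s IH] p //= /andP[lpy ps]; exact: leq_trans lpy (IH _ ps).
Qed.

Lemma path_range (T : Type) (g : T -> nat) p s :
  path (relpre g leq) p s ->
  size s <= nd (relpre g ltn) p s + (g (last p s) - g p).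
Proof.
elim: s p => [|y s IH] p //= /andP[lpy ps].
have := IH y ps; have := path_last_le ps; rewrite /=.
case: ltnP => /= H1; lia.
Qed.

Lemma size_Drange (T : eqType) (g : T -> nat) N s :
  (forall u, u \in s -> g u < N) -> sorted (relpre g leq) s ->
  size s <= Dseq (relpre g ltn) s + N.
Proof.
case: s => [|x s] //= Hb ps.
have := path_range ps.
have : g (last x s) < N by apply: Hb; exact: mem_last.
lia.
Qed.

Lemma D_rounds (T : eqType) (rr : T -> nat) (lt : rel T) S s :
  sorted (fun p q => (rr p < rr q) || (rr p == rr q) && lt p q) s ->
  (forall u, u \in s -> rr u < S) -> Dseq lt s <= S.-1.
Proof.
case: s => [|x s] //= ps Hb.
suff: nd lt x s <= rr (last x s) - rr x.
  have : rr (last x s) < S by apply: Hb; exact: mem_last.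
  lia.
elim: s x {Hb} ps => [|y s IH] x //= /andP[Hxy ps].
have := IH y ps.
have : rr y <= rr (last y s).
  clear IH Hxy.
  elim: s y ps => [|z s IHs] y //= /andP[Hyz ps].
  apply: leq_trans (IHs _ ps); move: Hyz; case: (lt y z); lia.
move: Hxy; case: (lt x y) => /=; lia.
Qed.

Lemma count_ltS (T : Type) (f : T -> nat) a c :
  count (fun u => f u < a.+1) c = count (fun u => f u < a) c + count (fun u => f u == a) c.
Proof.
elim: c => [|x c IH] //=; rewrite IH ltnS leq_eqVlt; case: eqP => /= H; lia.
Qed.

Lemma count_split (T : Type) (f : T -> nat) A B c :
  (forall x, x < A -> count (fun u => f u == x) c <= B) ->
  all (fun u => f u < A) c -> size c <= A * B.
Proof.
move=> H Hall; rewrite -(count_predT c).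
have -> : count predT c = count (fun u => f u < A) c.
  by apply/esym/eqP; rewrite -all_count.
elim: A H {Hall} => [|A IH] H.
  by rewrite (eq_count (a2 := pred0)) ?count_pred0.
rewrite count_ltS mulSn addnC leq_add //; first exact: H.
by apply: IH => x xA; apply: H; apply: ltnW.
Qed.

Lemma sorted_and (T : Type) (r1 r2 : rel T) s :
  sorted r1 s -> sorted r2 s -> sorted (fun u v => r1 u v && r2 u v) s.
Proof.
case: s => [|x s] //=; elim: s x => [|y s IH] x //= /andP[-> p1] /andP[-> p2] /=.
exact: IH.
Qed.

Lemma sorted_uniq_neq (T : eqType) (r : rel T) s :
  sorted r s -> uniq s -> sorted (fun u v => r u v && (u != v)) s.
Proof.
case: s => [|x s] //=; elim: s x => [|y s IH] x //= /andP[-> ps] /andP[nx us] /=.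
rewrite IH //; move: nx; rewrite inE negb_or => /andP[-> _] //.
Qed.

Lemma all_const (T : eqType) (g : T -> nat) x s :
  sorted (fun u v => g u == g v) (x :: s) -> forall u, u \in x :: s -> g u = g x.
Proof.
elim: s x => [|y s IH] x /=.
  by move=> _ u; rewrite inE => /eqP->.
move=> /andP[/eqP gxy ps] u; rewrite inE => /orP[/eqP->//|us].
by rewrite gxy; apply: IH.
Qed.


Lemma mr_le A A' n z z' : z < n -> z' < n ->
  (A * n + z <= A' * n + z') = (A < A') || (A == A') && (z <= z').
Proof.
move=> hz hz'; case: (ltngtP A A') => [lt|gt|e] /=; last by rewrite e leq_add2l.
- have : A.+1 * n <= A' * n by rewrite leq_mul2r lt orbT.
  rewrite mulSn; lia.
- have : A'.+1 * n <= A * n by rewrite leq_mul2r gt orbT.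
  rewrite mulSn; lia.
Qed.

Lemma mr_lt A A' n z z' : z < n -> z' < n ->
  (A * n + z < A' * n + z') = (A < A') || (A == A') && (z < z').
Proof.
move=> hz hz'; rewrite ltnNge mr_le //; case: (ltngtP A A') => //= _; lia.
Qed.

Lemma mr_eq A A' n z z' : z < n -> z' < n ->
  (A * n + z == A' * n + z') = (A == A') && (z == z').
Proof.
move=> hz hz'; rewrite eqn_leq !mr_le //; case: (ltngtP A A') => //= _; lia.
Qed.

Definition cW cz i := i %/ cz.
Definition cX b cz i := i %/ cz %/ b.
Definition cY b cz i := i %/ cz %% b.
Definition cZ cz i := i %% cz.

Lemma decW b cz i : cW cz i = cX b cz i * b + cY b cz i.
Proof. exact: divn_eq. Qed.
Lemma decI cz i : i = cW cz i * cz + cZ cz i.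
Proof. exact: divn_eq. Qed.

Lemma F_le b cz i j : 0 < b -> 0 < cz ->
  [/\ (cW cz i <= cW cz j) = (cX b cz i < cX b cz j) || (cX b cz i == cX b cz j) && (cY b cz i <= cY b cz j),
      (cW cz i == cW cz j) = (cX b cz i == cX b cz j) && (cY b cz i == cY b cz j),
      (i <= j) = (cW cz i < cW cz j) || (cW cz i == cW cz j) && (cZ cz i <= cZ cz j)
    & (i == j) = (cW cz i == cW cz j) && (cZ cz i == cZ cz j)].
Proof.
move=> hb hc.
have hy : forall m, cY b cz m < b by move=> m; exact: ltn_pmod.
have hz : forall m, cZ cz m < cz by move=> m; exact: ltn_pmod.
split.
- by rewrite !(decW b) mr_le.
- by rewrite !(decW b) mr_eq.
- by rewrite {1}(decI cz i) {1}(decI cz j) mr_le.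
- by rewrite {1}(decI cz i) {1}(decI cz j) mr_eq.
Qed.

Definition occ s k : seq (nat * nat) := [seq (i, r) | i <- iota 0 k, r <- iota 0 s].
Definition key1 s (p : nat * nat) := p.1 * s + p.2.
Definition key2 s b cz (p : nat * nat) :=
  ((cX b cz p.1 * b + (b.-1 - cY b cz p.1)) * cz + (cz.-1 - cZ cz p.1)) * s + p.2.
Definition key3 s k b cz (p : nat * nat) :=
  (((k - cX b cz p.1) * b + cY b cz p.1) * s + p.2) * cz + (cz.-1 - cZ cz p.1).
Definition key4 s k b cz (p : nat * nat) :=
  (((k - cX b cz p.1) * b + (b.-1 - cY b cz p.1)) * s + p.2) * cz + cZ cz p.1.

Lemma cX_le b cz i : cX b cz i <= i.
Proof. by rewrite /cX; apply: leq_trans (leq_div _ _) (leq_div _ _). Qed.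

Lemma key3_dec s k b cz p q : 0 < s -> 0 < b -> 0 < cz -> p.1 < k -> q.1 < k -> p.2 < s -> q.2 < s ->
  key3 s k b cz p <= key3 s k b cz q ->
  (cX b cz q.1 < cX b cz p.1) || (cX b cz p.1 == cX b cz q.1) && (cY b cz p.1 <= cY b cz q.1).
Proof.
move=> hs hb hc pk qk ps qs.
have hy : forall m, cY b cz m < b by move=> m; exact: ltn_pmod.
have hz : forall m, cZ cz m < cz by move=> m; exact: ltn_pmod.
have h1 := cX_le b cz p.1; have h2 := cX_le b cz q.1.
have h3 := hy p.1; have h4 := hy q.1; have h5 := hz p.1; have h6 := hz q.1.
rewrite /key3 !(mr_le, mr_lt, mr_eq); lia.
Qed.

Lemma bnds b cz i : 0 < b -> 0 < cz ->
  [/\ cX b cz i <= i, cY b cz i < b & cZ cz i < cz].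
Proof. by move=> hb hc; split; [exact: cX_le|exact: ltn_pmod|exact: ltn_pmod]. Qed.

Ltac getb b cz i hb hc :=
  let h1 := fresh "h" in let h2 := fresh "h" in let h3 := fresh "h" in
  case: (bnds i hb hc) => h1 h2 h3.
Ltac getF b cz i j hb hc :=
  let h1 := fresh "f" in let h2 := fresh "f" in let h3 := fresh "f" in let h4 := fresh "f" in
  case: (F_le i j hb hc) => h1 h2 h3 h4.


Lemma key1_dec s p q : p.2 < s -> q.2 < s -> key1 s p <= key1 s q -> p.1 <= q.1.
Proof. move=> ps qs; rewrite /key1 mr_le //; lia. Qed.

Lemma key4_dec s k b cz p q : 0 < s -> 0 < b -> 0 < cz -> p.1 < k -> q.1 < k -> p.2 < s -> q.2 < s ->
  key4 s k b cz p <= key4 s k b cz q ->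
  (cX b cz q.1 < cX b cz p.1) || (cX b cz p.1 == cX b cz q.1) && (cY b cz q.1 <= cY b cz p.1).
Proof.
move=> hs hb hc pk qk ps qs.
getb b cz p.1 hb hc; getb b cz q.1 hb hc.
rewrite /key4 !(mr_le, mr_lt, mr_eq); lia.
Qed.

Lemma key2_dec s b cz p q : 0 < s -> 0 < b -> 0 < cz -> p.2 < s -> q.2 < s ->
  key2 s b cz p <= key2 s b cz q ->
  (cX b cz p.1 < cX b cz q.1) || (cX b cz p.1 == cX b cz q.1) && (q.1 <= p.1).
Proof.
move=> hs hb hc ps qs.
getb b cz p.1 hb hc; getb b cz q.1 hb hc.
case: (F_le q.1 p.1 hb hc) => _ f2 f3 _.
case: (F_le p.1 q.1 hb hc) => f1 _ _ _.
rewrite f3 [cW cz q.1 < _]ltnNge f1 f2.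
rewrite /key2 !(mr_le, mr_lt, mr_eq); lia.
Qed.

Lemma key4_line s k b cz p q : 0 < s -> 0 < b -> 0 < cz -> p.1 < k -> q.1 < k -> p.2 < s -> q.2 < s ->
  cW cz p.1 = cW cz q.1 -> p != q ->
  key4 s k b cz p <= key4 s k b cz q ->
  (p.2 < q.2) || (p.2 == q.2) && (cZ cz p.1 < cZ cz q.1).
Proof.
move=> hs hb hc pk qk ps qs; case: p q pk qk ps qs => [i r] [j t] /= pk qk ps qs hW.
rewrite xpair_eqE.
getb b cz i hb hc; getb b cz j hb hc.
case: (F_le i j hb hc) => _ f2 _ f4.
rewrite f4 hW eqxx /=.
move/eqP: hW; rewrite f2 => /andP[/eqP ex /eqP ey].
rewrite /key4 /= ex ey !(mr_le, mr_lt, mr_eq); lia.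
Qed.

Lemma key3_line s k b cz p q : 0 < s -> 0 < b -> 0 < cz -> p.1 < k -> q.1 < k -> p.2 < s -> q.2 < s ->
  cW cz p.1 = cW cz q.1 -> p != q ->
  key3 s k b cz p <= key3 s k b cz q ->
  (p.2 < q.2) || (p.2 == q.2) && (cz.-1 - cZ cz p.1 < cz.-1 - cZ cz q.1).
Proof.
move=> hs hb hc pk qk ps qs; case: p q pk qk ps qs => [i r] [j t] /= pk qk ps qs hW.
rewrite xpair_eqE.
getb b cz i hb hc; getb b cz j hb hc.
case: (F_le i j hb hc) => _ f2 _ f4.
rewrite f4 hW eqxx /=.
move/eqP: hW; rewrite f2 => /andP[/eqP ex /eqP ey].
rewrite /key3 /= ex ey !(mr_le, mr_lt, mr_eq); lia.
Qed.


Definition mkword s k (key : nat * nat -> nat) : seq nat :=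
  map (fun p => p.1.+1) (sort (fun p q => key p <= key q) (occ s k)).

Lemma occP s k p : p \in occ s k -> p.1 < k /\ p.2 < s.
Proof.
case/allpairsP => [[i r] [/= hi hr ->]]; move: hi hr; rewrite !mem_iota /=; lia.
Qed.

Lemma occ_uniq s k : uniq (occ s k).
Proof.
apply: allpairs_uniq; [exact: iota_uniq|exact: iota_uniq|].
by move=> [i r] [j t] _ _ /= [-> ->].
Qed.

Lemma key_total (key : nat * nat -> nat) : total (fun p q => key p <= key q).
Proof. by move=> p q; apply: leq_total. Qed.

Lemma key_trans (key : nat * nat -> nat) : transitive (fun p q => key p <= key q).
Proof. by move=> p q r; apply: leq_trans. Qed.

Lemma sorted_word s k key (R : rel nat) :
  (forall p q, p \in occ s k -> q \in occ s k -> key p <= key q -> R p.1.+1 q.1.+1) ->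
  sorted R (mkword s k key).
Proof.
move=> H; rewrite /mkword sorted_map.
apply: (sub_in_sorted (P := mem (occ s k))) (sort_sorted (key_total key) _).
  by move=> p q; apply: H.
by apply/allP => p; rewrite mem_sort.
Qed.

Lemma mem_word s k key v : v \in mkword s k key -> 0 < v <= k.
Proof.
by case/mapP => p; rewrite mem_sort => /occP [h _] ->.
Qed.

Lemma count_occ s k l : count (fun p : nat * nat => p.1.+1 == l) (occ s k) = if 0 < l <= k then s else 0.
Proof.
elim: k => [|k IH]; first by rewrite /occ /=; case: l.
rewrite /occ -addn1 iotaD map_cat flatten_cat count_cat /= cats0.
rewrite -/(occ s k) IH count_map.
case: (eqVneq (k.+1) l) => [<-|ne].
  rewrite (eq_count (a2 := predT)); last by move=> r /=; rewrite add0n eqxx.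
  rewrite count_predT size_iota.
  case: ifP => h1; case: ifP => h2; lia.
rewrite (eq_count (a2 := pred0)); last by move=> r /=; rewrite add0n (negbTE ne).
rewrite count_pred0; case: ifP => h1; case: ifP => h2; lia.
Qed.

Lemma count_word s k key l : count_mem l (mkword s k key) = if 0 < l <= k then s else 0.
Proof.
rewrite /mkword count_map -count_occ.
have /permP -> // : perm_eq (sort (fun p q => key p <= key q) (occ s k)) (occ s k).
by rewrite perm_sort.
Qed.

Lemma multiperm_word s k key : is_multiperm (nseq k s) (mkword s k key).
Proof.
split.
  apply/allP => v /mem_word; rewrite size_nseq; lia.
move=> l; rewrite size_nseq => hl; rewrite count_word nth_nseq.
case: ifP => h1; case: ifP => h2 //; lia.
Qed.

Definition LX b cz (v : nat) := cX b cz v.-1.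
Definition LY b cz (v : nat) := cY b cz v.-1.
Definition LZ cz (v : nat) := cZ cz v.-1.
Definition LW cz (v : nat) := cW cz v.-1.
Definition LZr cz (v : nat) := cz.-1 - cZ cz v.-1.

Definition RA (u v : nat) := u.-1 <= v.-1.
Definition Q2 b cz u v := (LX b cz u < LX b cz v) || (LX b cz u == LX b cz v) && (v.-1 <= u.-1).
Definition Q3 b cz u v := (LX b cz v < LX b cz u) || (LX b cz u == LX b cz v) && (LY b cz u <= LY b cz v).
Definition Q4 b cz u v := (LX b cz v < LX b cz u) || (LX b cz u == LX b cz v) && (LY b cz v <= LY b cz u).

Lemma RA_trans : transitive RA. Proof. rewrite /RA => ???; lia. Qed.
Lemma Q2_trans b cz : transitive (Q2 b cz). Proof. rewrite /Q2 => ???; lia. Qed.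
Lemma Q3_trans b cz : transitive (Q3 b cz). Proof. rewrite /Q3 => ???; lia. Qed.
Lemma Q4_trans b cz : transitive (Q4 b cz). Proof. rewrite /Q4 => ???; lia. Qed.

Definition w1 s k := mkword s k (key1 s).
Definition w2 s k b cz := mkword s k (key2 s b cz).
Definition w3 s k b cz := mkword s k (key3 s k b cz).
Definition w4 s k b cz := mkword s k (key4 s k b cz).

Lemma w1_sorted s k : sorted RA (w1 s k).
Proof.
apply: sorted_word => p q /occP[_ hp] /occP[_ hq]; exact: key1_dec.
Qed.
Lemma w2_sorted s k b cz : 0 < s -> 0 < b -> 0 < cz -> sorted (Q2 b cz) (w2 s k b cz).
Proof.
move=> hs hb hc; apply: sorted_word => p q /occP[_ hp] /occP[_ hq]; exact: key2_dec.
Qed.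
Lemma w3_sorted s k b cz : 0 < s -> 0 < b -> 0 < cz -> sorted (Q3 b cz) (w3 s k b cz).
Proof.
move=> hs hb hc; apply: sorted_word => p q /occP[hp1 hp] /occP[hq1 hq]; exact: key3_dec.
Qed.
Lemma w4_sorted s k b cz : 0 < s -> 0 < b -> 0 < cz -> sorted (Q4 b cz) (w4 s k b cz).
Proof.
move=> hs hb hc; apply: sorted_word => p q /occP[hp1 hp] /occP[hq1 hq]; exact: key4_dec.
Qed.


Lemma line_gen s k cz (key : nat * nat -> nat) (lt : rel (nat * nat)) w0 :
  (forall p q, p \in occ s k -> q \in occ s k -> cW cz p.1 = w0 -> cW cz q.1 = w0 ->
     p != q -> key p <= key q -> (p.2 < q.2) || (p.2 == q.2) && lt p q) ->
  Dseq lt [seq p <- sort (fun p q => key p <= key q) (occ s k) | cW cz p.1 == w0] <= s.-1.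
Proof.
move=> H.
set L := [seq p <- _ | _].
have sL : sorted (fun p q => key p <= key q) L.
  by apply: sorted_filter; [exact: key_trans | exact: sort_sorted (key_total _) _].
have uL : uniq L by rewrite filter_uniq // sort_uniq occ_uniq.
apply: (D_rounds (rr := snd)).
  apply: (sub_in_sorted (P := mem L)) (sorted_uniq_neq sL uL); last by apply/allP.
  move=> p q; rewrite !mem_filter !mem_sort => /andP[/eqP hp op] /andP[/eqP hq oq] /andP[kpq npq].
  exact: H.
by move=> u; rewrite mem_filter mem_sort => /andP[_ /occP[]].
Qed.

Lemma line_D4 s k b cz w0 : 0 < s -> 0 < b -> 0 < cz ->
  Dseq (relpre (LZ cz) ltn) [seq v <- w4 s k b cz | LW cz v == w0] <= s.-1.
Proof.
move=> hs hb hc; rewrite /w4 /mkword filter_map Dseq_map.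
apply: line_gen => p q /occP[hp1 hp2] /occP[hq1 hq2] ep eq npq kpq.
exact: (key4_line hs hb hc hp1 hq1 hp2 hq2 (etrans ep (esym eq)) npq kpq).
Qed.

Lemma line_D3 s k b cz w0 : 0 < s -> 0 < b -> 0 < cz ->
  Dseq (relpre (LZr cz) ltn) [seq v <- w3 s k b cz | LW cz v == w0] <= s.-1.
Proof.
move=> hs hb hc; rewrite /w3 /mkword filter_map Dseq_map.
apply: line_gen => p q /occP[hp1 hp2] /occP[hq1 hq2] ep eq npq kpq.
exact: (key3_line hs hb hc hp1 hq1 hp2 hq2 (etrans ep (esym eq)) npq kpq).
Qed.


Lemma F_lt b cz i j : 0 < b -> (cW cz i < cW cz j) = (cX b cz i < cX b cz j) || (cX b cz i == cX b cz j) && (cY b cz i < cY b cz j).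
Proof. move=> hb; rewrite !(decW b) mr_lt //; exact: ltn_pmod. Qed.

Lemma L34 b cz u v : 0 < b -> 0 < cz -> Q3 b cz u v -> Q4 b cz u v -> LX b cz u == LX b cz v ->
  LW cz u == LW cz v.
Proof.
move=> hb hc; case: (F_le u.-1 v.-1 hb hc) => f1 f2 f3 _.
case: (F_le v.-1 u.-1 hb hc) => g1 g2 g3 _.
have l1 := @F_lt b cz u.-1 v.-1 hb; have l2 := @F_lt b cz v.-1 u.-1 hb.
getb b cz u.-1 hb hc; getb b cz v.-1 hb hc.
rewrite /Q2 /Q3 /Q4 /RA /LW /LX /LY /LZ /LZr ?(f3, g3, l1, l2, f1, g1, f2, g2); clear f1 f2 f3 g1 g2 g3 l1 l2; lia.
Qed.

Lemma L13 b cz u v : 0 < b -> 0 < cz -> RA u v -> Q3 b cz u v -> LY b cz u == LY b cz v ->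
  (LW cz u == LW cz v) && (LZr cz v <= LZr cz u).
Proof.
move=> hb hc; case: (F_le u.-1 v.-1 hb hc) => f1 f2 f3 _.
case: (F_le v.-1 u.-1 hb hc) => g1 g2 g3 _.
have l1 := @F_lt b cz u.-1 v.-1 hb; have l2 := @F_lt b cz v.-1 u.-1 hb.
getb b cz u.-1 hb hc; getb b cz v.-1 hb hc.
rewrite /Q2 /Q3 /Q4 /RA /LW /LX /LY /LZ /LZr ?(f3, g3, l1, l2, f1, g1, f2, g2); clear f1 f2 f3 g1 g2 g3 l1 l2; lia.
Qed.

Lemma L24 b cz u v : 0 < b -> 0 < cz -> Q2 b cz u v -> Q4 b cz u v -> LY b cz u == LY b cz v ->
  (LW cz u == LW cz v) && (LZ cz v <= LZ cz u).
Proof.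
move=> hb hc; case: (F_le u.-1 v.-1 hb hc) => f1 f2 f3 _.
case: (F_le v.-1 u.-1 hb hc) => g1 g2 g3 _.
have l1 := @F_lt b cz u.-1 v.-1 hb; have l2 := @F_lt b cz v.-1 u.-1 hb.
getb b cz u.-1 hb hc; getb b cz v.-1 hb hc.
rewrite /Q2 /Q3 /Q4 /RA /LW /LX /LY /LZ /LZr ?(f3, g3, l1, l2, f1, g1, f2, g2); clear f1 f2 f3 g1 g2 g3 l1 l2; lia.
Qed.

Lemma L14 b cz u v : 0 < b -> 0 < cz -> RA u v -> Q4 b cz u v ->
  (LW cz u == LW cz v) && (LZ cz u <= LZ cz v).
Proof.
move=> hb hc; case: (F_le u.-1 v.-1 hb hc) => f1 f2 f3 _.
case: (F_le v.-1 u.-1 hb hc) => g1 g2 g3 _.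
have l1 := @F_lt b cz u.-1 v.-1 hb; have l2 := @F_lt b cz v.-1 u.-1 hb.
getb b cz u.-1 hb hc; getb b cz v.-1 hb hc.
rewrite /Q2 /Q3 /Q4 /RA /LW /LX /LY /LZ /LZr ?(f3, g3, l1, l2, f1, g1, f2, g2); clear f1 f2 f3 g1 g2 g3 l1 l2; lia.
Qed.

Lemma L23 b cz u v : 0 < b -> 0 < cz -> Q2 b cz u v -> Q3 b cz u v ->
  (LW cz u == LW cz v) && (LZr cz u <= LZr cz v).
Proof.
move=> hb hc; case: (F_le u.-1 v.-1 hb hc) => f1 f2 f3 _.
case: (F_le v.-1 u.-1 hb hc) => g1 g2 g3 _.
have l1 := @F_lt b cz u.-1 v.-1 hb; have l2 := @F_lt b cz v.-1 u.-1 hb.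
getb b cz u.-1 hb hc; getb b cz v.-1 hb hc.
rewrite /Q2 /Q3 /Q4 /RA /LW /LX /LY /LZ /LZr ?(f3, g3, l1, l2, f1, g1, f2, g2); clear f1 f2 f3 g1 g2 g3 l1 l2; lia.
Qed.

Lemma conj_trans (T : Type) (R1 R2 : rel T) : transitive R1 -> transitive R2 ->
  transitive (fun u v => R1 u v && R2 u v).
Proof.
move=> t1 t2 y x z /andP[a1 a2] /andP[b1 b2]; apply/andP; split; [exact: t1 a1 b1|exact: t2 a2 b2].
Qed.

Lemma common_sorted (R1 R2 : rel nat) w w' c : transitive R1 -> transitive R2 ->
  sorted R1 w -> sorted R2 w' -> subseq c w -> subseq c w' ->
  sorted (fun u v => R1 u v && R2 u v) c.
Proof.
move=> t1 t2 s1 s2 h1 h2; apply: sorted_and; [exact: (@subseq_sorted _ _ t1 _ _ h1 s1)|exact: (@subseq_sorted _ _ t2 _ _ h2 s2)].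
Qed.

Lemma X_lt a b cz k v : 0 < b -> 0 < cz -> k <= a * b * cz -> 0 < v <= k -> LX b cz v < a.
Proof.
move=> hb hc hk hv; rewrite /LX /cX ltn_divLR // ltn_divLR //.
have : v.-1 < k by lia.
move=> h; exact: leq_trans h hk.
Qed.

Lemma ltrel_trans (g : nat -> nat) : transitive (relpre g ltn).
Proof. by move=> y x z; apply: ltn_trans. Qed.

Lemma pair12 s k a b cz c : 0 < s -> 0 < b -> 0 < cz -> k <= a * b * cz ->
  subseq c (w1 s k) -> subseq c (w2 s k b cz) -> size c <= a * s.
Proof.
move=> hs hb hc hk h1 h2.
have sc := common_sorted RA_trans (@Q2_trans b cz) (w1_sorted s k) (w2_sorted k hs hb hc) h1 h2.
have mc : forall v, v \in c -> 0 < v <= k := fun v vc => mem_word (mem_subseq h1 vc).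
apply: (count_split (f := LX b cz)); last by apply/allP => v /mc; apply: X_lt.
move=> x _; rewrite -size_filter.
set f := filter _ c.
have sf : sorted (fun u v => u == v) f.
  apply: (sub_in_sorted (P := mem f)) (sorted_filter (conj_trans RA_trans (@Q2_trans b cz)) _ sc); last by apply/allP.
  move=> u v; rewrite !mem_filter => /andP[/eqP xu uc] /andP[/eqP xv vc] /andP[].
  have := mc u uc; have := mc v vc; rewrite /RA /Q2 xu xv eqxx; lia.
have fc : subseq f c by exact: filter_subseq.
case Ef: f sf fc => [|h t] sf fc; first by [].
have allh : all (pred1 h) (h :: t).
  by apply/allP => u /(all_const (g := fun x : nat => x) sf) /= ->.
move: allh; rewrite all_count => /eqP <-.
apply: leq_trans (leq_count_subseq _ fc) _.
apply: leq_trans (leq_count_subseq _ h1) _.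
rewrite count_word; case: ifP => //.
Qed.

Lemma mem_c s k key c v : subseq c (mkword s k key) -> v \in c -> 0 < v <= k.
Proof. by move=> h vc; exact: mem_word (mem_subseq h vc). Qed.

Lemma line_sub w c (g : nat -> nat) w0 :
  subseq c w -> all (fun u => g u == w0) c -> subseq c [seq u <- w | g u == w0].
Proof. by move=> h a; rewrite subseq_filter a h. Qed.

Lemma pair34 s k a b cz c : 0 < s -> 0 < b -> 0 < cz -> k <= a * b * cz ->
  subseq c (w3 s k b cz) -> subseq c (w4 s k b cz) -> size c <= a * (s.-1 + s.-1).+1.
Proof.
move=> hs hb hc hk h3 h4.
have sc := common_sorted (@Q3_trans b cz) (@Q4_trans b cz) (w3_sorted k hs hb hc) (w4_sorted k hs hb hc) h3 h4.
have mc : forall v, v \in c -> 0 < v <= k := fun v vc => mem_c h3 vc.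
apply: (count_split (f := LX b cz)); last by apply/allP => v /mc; apply: X_lt.
move=> x _; rewrite -size_filter.
set f := filter _ c.
have sf : sorted (fun u v => LW cz u == LW cz v) f.
  apply: (sub_in_sorted (P := mem f)) (sorted_filter (conj_trans (@Q3_trans b cz) (@Q4_trans b cz)) _ sc); last by apply/allP.
  move=> u v; rewrite !mem_filter => /andP[/eqP xu uc] /andP[/eqP xv vc] /andP[q3 q4].
  have e : LX b cz u == LX b cz v by rewrite xu xv.
  exact: L34 hb hc q3 q4 e.
have fc : subseq f c by exact: filter_subseq.
case Ef: f sf fc => [|h t] sf fc; first by [].
have allh : all (fun u => LW cz u == LW cz h) (h :: t).
  by apply/allP => u /(all_const sf) ->.
have f3 := line_sub (subseq_trans fc h3) allh.
have f4 := line_sub (subseq_trans fc h4) allh.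
apply: leq_trans (size_D2 (lt1 := relpre (LZ cz) ltn) (lt2 := relpre (LZr cz) ltn) _ _) _.
  move=> u v /=; have := @ltn_pmod u.-1 cz hc; have := @ltn_pmod v.-1 cz hc.
  rewrite /LZ /LZr /cZ; lia.
rewrite ltnS leq_add //.
  exact: leq_trans (@Dseq_mono _ _ (@ltrel_trans _) _ _ f4) (@line_D4 s k b cz _ hs hb hc).
exact: leq_trans (@Dseq_mono _ _ (@ltrel_trans _) _ _ f3) (@line_D3 s k b cz _ hs hb hc).
Qed.

Lemma pair13 s k b cz c : 0 < s -> 0 < b -> 0 < cz ->
  subseq c (w1 s k) -> subseq c (w3 s k b cz) -> size c <= b * s.
Proof.
move=> hs hb hc h1 h3.
have sc := common_sorted RA_trans (@Q3_trans b cz) (w1_sorted s k) (w3_sorted k hs hb hc) h1 h3.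
apply: (count_split (f := LY b cz)); last by apply/allP => v _; exact: ltn_pmod.
move=> y _; rewrite -size_filter.
set f := filter _ c.
have sf : sorted (fun u v => (LW cz u == LW cz v) && (LZr cz v <= LZr cz u)) f.
  apply: (sub_in_sorted (P := mem f)) (sorted_filter (conj_trans RA_trans (@Q3_trans b cz)) _ sc); last by apply/allP.
  move=> u v; rewrite !mem_filter => /andP[/eqP xu uc] /andP[/eqP xv vc] /andP[q1 q3].
  have e : LY b cz u == LY b cz v by rewrite xu xv.
  exact: L13 hb hc q1 q3 e.
have fc : subseq f c by exact: filter_subseq.
case Ef: f sf fc => [|h t] sf fc; first by [].
have sw : sorted (fun u v => LW cz u == LW cz v) (h :: t).
  by apply: sub_sorted sf => u v /andP[].
have allh : all (fun u => LW cz u == LW cz h) (h :: t).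
  by apply/allP => u /(all_const sw) ->.
have f3 := line_sub (subseq_trans fc h3) allh.
apply: leq_trans (size_D1 (lt := relpre (LZr cz) ltn) _ sf) _.
  by move=> u v /andP[_]; rewrite /= -leqNgt.
rewrite -(prednK hs) ltnS.
exact: leq_trans (@Dseq_mono _ _ (@ltrel_trans _) _ _ f3) (@line_D3 s k b cz _ hs hb hc).
Qed.

Lemma pair24 s k b cz c : 0 < s -> 0 < b -> 0 < cz ->
  subseq c (w2 s k b cz) -> subseq c (w4 s k b cz) -> size c <= b * s.
Proof.
move=> hs hb hc h2 h4.
have sc := common_sorted (@Q2_trans b cz) (@Q4_trans b cz) (w2_sorted k hs hb hc) (w4_sorted k hs hb hc) h2 h4.
apply: (count_split (f := LY b cz)); last by apply/allP => v _; exact: ltn_pmod.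
move=> y _; rewrite -size_filter.
set f := filter _ c.
have sf : sorted (fun u v => (LW cz u == LW cz v) && (LZ cz v <= LZ cz u)) f.
  apply: (sub_in_sorted (P := mem f)) (sorted_filter (conj_trans (@Q2_trans b cz) (@Q4_trans b cz)) _ sc); last by apply/allP.
  move=> u v; rewrite !mem_filter => /andP[/eqP xu uc] /andP[/eqP xv vc] /andP[q1 q3].
  have e : LY b cz u == LY b cz v by rewrite xu xv.
  exact: L24 hb hc q1 q3 e.
have fc : subseq f c by exact: filter_subseq.
case Ef: f sf fc => [|h t] sf fc; first by [].
have sw : sorted (fun u v => LW cz u == LW cz v) (h :: t).
  by apply: sub_sorted sf => u v /andP[].
have allh : all (fun u => LW cz u == LW cz h) (h :: t).
  by apply/allP => u /(all_const sw) ->.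
have f4 := line_sub (subseq_trans fc h4) allh.
apply: leq_trans (size_D1 (lt := relpre (LZ cz) ltn) _ sf) _.
  by move=> u v /andP[_]; rewrite /= -leqNgt.
rewrite -(prednK hs) ltnS.
exact: leq_trans (@Dseq_mono _ _ (@ltrel_trans _) _ _ f4) (@line_D4 s k b cz _ hs hb hc).
Qed.

Lemma pair14 s k b cz c : 0 < s -> 0 < b -> 0 < cz ->
  subseq c (w1 s k) -> subseq c (w4 s k b cz) -> size c <= s.-1 + cz.
Proof.
move=> hs hb hc h1 h4.
have sc := common_sorted RA_trans (@Q4_trans b cz) (w1_sorted s k) (w4_sorted k hs hb hc) h1 h4.
have sf : sorted (fun u v => (LW cz u == LW cz v) && (LZ cz u <= LZ cz v)) c.
  by apply: sub_sorted sc => u v /andP[q1 q4]; exact: L14 hb hc q1 q4.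
case Ec: c sf h4 => [|h t] sf h4'; first by [].
have sw : sorted (fun u v => LW cz u == LW cz v) (h :: t).
  by apply: sub_sorted sf => u v /andP[].
have allh : all (fun u => LW cz u == LW cz h) (h :: t).
  by apply/allP => u /(all_const sw) ->.
have f4 := line_sub h4' allh.
apply: leq_trans (size_Drange (g := LZ cz) (N := cz) _ _) _.
- by move=> u _; exact: ltn_pmod.
- by apply: sub_sorted sf => u v /andP[].
rewrite leq_add2r.
exact: leq_trans (@Dseq_mono _ _ (@ltrel_trans _) _ _ f4) (@line_D4 s k b cz _ hs hb hc).
Qed.

Lemma pair23 s k b cz c : 0 < s -> 0 < b -> 0 < cz ->
  subseq c (w2 s k b cz) -> subseq c (w3 s k b cz) -> size c <= s.-1 + cz.
Proof.
move=> hs hb hc h2 h3.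
have sc := common_sorted (@Q2_trans b cz) (@Q3_trans b cz) (w2_sorted k hs hb hc) (w3_sorted k hs hb hc) h2 h3.
have sf : sorted (fun u v => (LW cz u == LW cz v) && (LZr cz u <= LZr cz v)) c.
  by apply: sub_sorted sc => u v /andP[q1 q4]; exact: L23 hb hc q1 q4.
case Ec: c sf h3 => [|h t] sf h3'; first by [].
have sw : sorted (fun u v => LW cz u == LW cz v) (h :: t).
  by apply: sub_sorted sf => u v /andP[].
have allh : all (fun u => LW cz u == LW cz h) (h :: t).
  by apply/allP => u /(all_const sw) ->.
have f3 := line_sub h3' allh.
apply: leq_trans (size_Drange (g := LZr cz) (N := cz) _ _) _.
- by move=> u _; rewrite /LZr; lia.
- by apply: sub_sorted sf => u v /andP[].
rewrite leq_add2r.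
exact: leq_trans (@Dseq_mono _ _ (@ltrel_trans _) _ _ f3) (@line_D3 s k b cz _ hs hb hc).
Qed.


Lemma LCS_le w w' T : (forall c, subseq c w -> subseq c w' -> size c <= T) -> LCS w w' <= T.
Proof.
move=> H; rewrite /LCS; apply/bigmax_leqP_seq => c /mapP[m _ ->] hs.
by apply: H => //; exact: mask_subseq.
Qed.

Lemma all_masks_full n : nseq n true \in all_masks n.
Proof.
elim: n => [|n IH] /=; first by rewrite inE.
by rewrite mem_cat map_f.
Qed.

Lemma size_word s k key : size (mkword s k key) = s * k.
Proof.
by rewrite /mkword size_map size_sort /occ size_allpairs !size_iota mulnC.
Qed.

Definition Wset s k b cz := [:: w1 s k; w2 s k b cz; w3 s k b cz; w4 s k b cz].

Lemma comb s k a b cz T : 0 < s -> 0 < b -> 0 < cz -> k <= a * b * cz ->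
  a * (s.-1 + s.-1).+1 <= T -> b * s <= T -> s.-1 + cz <= T -> T < s * k ->
  [/\ size (Wset s k b cz) = 4, uniq (Wset s k b cz),
      (forall w, w \in Wset s k b cz -> is_multiperm (nseq k s) w) &
      (forall w w', w \in Wset s k b cz -> w' \in Wset s k b cz -> w <> w' ->
        LCS w w' <= T)].
Proof.
move=> hs hb hc hk ha hbT hcT hTk.
have has : a * s <= T.
  apply: leq_trans ha; rewrite leq_mul2l; apply/orP; right; lia.
have B : forall i j, i != j :> nat -> i < 4 -> j < 4 -> forall c,
    subseq c (nth [::] (Wset s k b cz) i) -> subseq c (nth [::] (Wset s k b cz) j) -> size c <= T.
  move=> i j ij hi hj c.
  case: i ij hi => [|[|[|[|i]]]] //; case: j hj => [|[|[|[|j]]]] //= _ _ _ h1 h2.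
  all: try first [ exact: leq_trans (pair12 hs hb hc hk h1 h2) has
             | exact: leq_trans (pair12 hs hb hc hk h2 h1) has
             | exact: leq_trans (pair13 hs hb hc h1 h2) hbT
             | exact: leq_trans (pair13 hs hb hc h2 h1) hbT
             | exact: leq_trans (pair14 hs hb hc h1 h2) hcT
             | exact: leq_trans (pair14 hs hb hc h2 h1) hcT
             | exact: leq_trans (pair23 hs hb hc h1 h2) hcT
             | exact: leq_trans (pair23 hs hb hc h2 h1) hcT
             | exact: leq_trans (pair24 hs hb hc h1 h2) hbT
             | exact: leq_trans (pair24 hs hb hc h2 h1) hbT
             | exact: leq_trans (pair34 hs hb hc hk h1 h2) ha
             | exact: leq_trans (pair34 hs hb hc hk h2 h1) ha ].
have mp : forall w, w \in Wset s k b cz -> is_multiperm (nseq k s) w.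
  by move=> w; rewrite !inE => /or4P[] /eqP ->; exact: multiperm_word.
split => //.
- apply/(uniqP [::]) => i j; rewrite !inE /= => hi hj E.
  apply/eqP; apply: contraT => ij.
  have := B i j ij hi hj (nth [::] (Wset s k b cz) i) (subseq_refl _).
  rewrite E subseq_refl => /(_ isT).
  have -> : size (nth [::] (Wset s k b cz) j) = s * k.
    by case: j hj {E ij} => [|[|[|[|j]]]] //= _; rewrite size_word.
  lia.
- move=> w w' /(nthP [::]) [i hi <-] /(nthP [::]) [j hj <-] ne.
  apply: LCS_le; apply: B => //.
  by apply/eqP => e; apply: ne; rewrite e.
Qed.


Lemma m_ge s k m : 0 < s -> 5 * s <= k -> 2 * s * s * k < (m+1)*(m+1)*(m+1) -> 2 * s <= m.
Proof.
move=> hs hk hm; rewrite leqNgt; apply/negP => hlt.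
have h1 : (m+1)*(m+1)*(m+1) <= (2*s)*(2*s)*(2*s).
  have e : m + 1 <= 2 * s by lia.
  by rewrite !leq_mul.
have h2 : 2 * s * s * (5 * s) <= 2 * s * s * k by rewrite leq_mul2l hk orbT.
nia.
Qed.

Lemma T_lt s k m q : 0 < s -> 5 * s <= k -> m * m * m <= 2 * s * s * k -> 3 * q <= 5 * s -> m + q < s * k.
Proof.
move=> hs hk hm hq; rewrite ltnNge; apply/negP => hle.
have e1 : s * (k - 2) <= m.
  rewrite mulnBr; lia.
have h1 : (s * (k-2)) * (s * (k-2)) * (s * (k-2)) <= m * m * m by rewrite !leq_mul.
have h3 : 3 <= k - 2 by lia.
have h4 : s * 3 <= s * (k-2) by rewrite leq_mul2l h3 orbT.
have h5 : (s * 3) * (s * 3) * (s * (k-2)) <= (s * (k-2)) * (s * (k-2)) * (s * (k-2)) by rewrite !leq_mul.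
have h6 : 2 * s * s * k < (s * 3) * (s * 3) * (s * (k-2)).
  have : 2 * k < 9 * (k - 2) by lia.
  nia.
lia.
Qed.

Open Scope Z_scope.
Lemma key_ineqZ (M s q : Z) : 1 <= s -> 3*q <= 5*s -> 5*s - 2 <= 3*q -> 2*s+1 <= M ->
  M*M*M <= (M + q - 2*s + 1)*(M+q-s)*(M+q-s).
Proof.
move=> h1 h2 h3 h4.
set u := q - 2*s + 1. set v := q - s.
have e : (M + q - 2*s + 1)*(M+q-s)*(M+q-s) = M*M*M + M*M*(u+2*v) + M*(v*(2*u+v)) + u*(v*v).
  rewrite /u /v; ring.
rewrite e.
have hv0 : 0 <= v by rewrite /v; lia.
have hv1 : v <= M by rewrite /v; lia.
have hM : 0 <= M by lia.
have H1 : M*M*(s-1) <= M*M*(u+2*v).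
  apply: Z.mul_le_mono_nonneg_l; [exact: Z.mul_nonneg_nonneg | rewrite /u /v; lia].
have H2 : 0 <= M*(v*(2*u+v)).
  apply: Z.mul_nonneg_nonneg => //; apply: Z.mul_nonneg_nonneg => //; rewrite /u /v; lia.
have H3 : (1-s)*(v*v) <= 3*u*(v*v).
  apply: Z.mul_le_mono_nonneg_r; [exact: Z.mul_nonneg_nonneg | rewrite /u; lia].
have H4 : v*v <= M*M by apply: Z.mul_le_mono_nonneg.
have H5 : 0 <= (s-1)*(M*M - v*v) by apply: Z.mul_nonneg_nonneg; lia.
have H6 : 0 <= M*M*(s-1) by apply: Z.mul_nonneg_nonneg; [exact: Z.mul_nonneg_nonneg | lia].
clearbody u v.
lia.
Qed.
Close Scope Z_scope.

Lemma cube_step s m q U V : 0 < s -> 2*s <= m -> q*3 <= 5*s -> 5*s < q*3 + 3 ->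
  U = m + q + 2 - 2*s -> V = m + q + 1 - s -> (m+1)*(m+1)*(m+1) <= U*V*V.
Proof.
move=> hs hm h1 h2 eU eV.
have hz := @key_ineqZ (Z.of_nat (m+1)) (Z.of_nat s) (Z.of_nat q) ltac:(lia) ltac:(lia) ltac:(lia) ltac:(lia).
have eU' : Z.of_nat U = (Z.of_nat (m+1) + Z.of_nat q - 2*Z.of_nat s + 1)%Z by rewrite eU; lia.
have eV' : Z.of_nat V = (Z.of_nat (m+1) + Z.of_nat q - Z.of_nat s)%Z by rewrite eV; lia.
rewrite -eU' -eV' in hz.
apply/leP; apply/Znat.Nat2Z.inj_le; rewrite !Znat.Nat2Z.inj_mul; exact: hz.
Qed.

Lemma final_step s k d m a b cz U V : 0 < s -> d <= 2 * s -> 2*s*s*k < (m+1)*(m+1)*(m+1) ->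
  (m+1)*(m+1)*(m+1) <= U*V*V -> U <= a * d -> V <= b * s -> V = cz -> 0 < d ->
  k <= a * b * cz.
Proof.
move=> hs hd hm hMU hU hV hVc hd0.
have h1 : U * V * V <= (a * d) * (b * s) * cz by rewrite -hVc !leq_mul.
have h2 : s * d * k <= 2*s*s*k.
  rewrite (mulnC (2*s) s) leq_mul2r leq_mul2l hd !orbT //.
have h3 : s * d * k < s * d * (a * b * cz).
  apply: (leq_ltn_trans h2); apply: leq_trans hm _; apply: leq_trans hMU _; apply: leq_trans h1 _.
  rewrite eq_leq //; rewrite !mulnA; congr (_ * _); rewrite mulnC !mulnA; congr (_ * _); rewrite mulnC mulnA; congr (_ * _); exact: mulnC.
rewrite ltn_pmul2l in h3; [exact: ltnW | by rewrite muln_gt0 hs].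
Qed.

Lemma params s k m : 0 < s -> 5*s <= k -> m*m*m <= 2*s*s*k -> 2*s*s*k < (m+1)*(m+1)*(m+1) ->
  let T := m + (5*s) %/ 3 in let d := (s.-1 + s.-1).+1 in
  let a := T %/ d in let b := T %/ s in let cz := T - s.-1 in
  [/\ 0 < b, 0 < cz, k <= a*b*cz, a*d <= T & [/\ b*s <= T, s.-1 + cz <= T & T < s*k]].
Proof.
move=> hs hk hm1 hm2 T d a b cz.
set q := (5*s) %/ 3.
have hq : 5 * s = q * 3 + (5*s) %% 3 by exact: divn_eq.
have hq2 : (5*s) %% 3 < 3 by exact: ltn_pmod.
have h2s := @m_ge s k m hs hk hm2.
have hT : T = m + q by [].
have hd : 0 < d by [].
have ha : T = a * d + T %% d by exact: divn_eq.
have ha2 : T %% d < d by exact: ltn_pmod.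
have hb : T = b * s + T %% s by exact: divn_eq.
have hb2 : T %% s < s by exact: ltn_pmod.
have hTk : T < s * k by apply: T_lt; lia.
have hbpos : 0 < b.
  rewrite divn_gt0 //; lia.
split => //; try lia.
have hU : m + q + 2 - 2 * s <= a * d.
  move: ha ha2 hs; rewrite /d hT; clear; lia.
have hV : m + q + 1 - s <= b * s.
  move: hb hb2 hs; rewrite hT; clear; lia.
have hVc : m + q + 1 - s = cz by rewrite /cz hT; move: hs; clear; lia.
have hMU := @cube_step s m q _ _ hs h2s ltac:(lia) ltac:(lia) erefl erefl.
apply: final_step hs _ hm2 hMU hU hV hVc hd.
rewrite /d; lia.
split => //; [move: hb hb2; clear; lia | rewrite /cz; lia].
Qed.


Lemma nat_le_R (x y : nat) : x <= y -> (INR x <= INR y)%R.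
Proof. by move/leP; apply: le_INR. Qed.

Lemma Rpower_pos x y : (0 < Rpower x y)%R.
Proof. rewrite /Rpower; exact: exp_pos. Qed.

Lemma real_bound (s k m q : nat) : m * m * m <= 2 * s * s * k -> 3 * q <= 5 * s ->
  (INR (m + q) <=
          Rpower (2 * INR s ^ 2 * INR k) (1 / 3)
          + 5 / 3 * INR s
          + Rpower (INR s) (4 / 3) * Rpower (INR k) (- (1 / 3)))%R.
Proof.
move=> hm hq.
have h3 : (0 <= Rpower (INR s) (4 / 3) * Rpower (INR k) (- (1 / 3)))%R.
  apply: Rmult_le_pos; apply: Rlt_le; exact: Rpower_pos.
have hq' : (3 * INR q <= 5 * INR s)%R.
  have := @nat_le_R _ _ hq; rewrite !mult_INR /=; lra.
have hm' : (INR m <= Rpower (2 * INR s ^ 2 * INR k) (1 / 3))%R.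
  case: (posnP m) => [->|mpos]; first by rewrite /=; apply: Rlt_le; exact: Rpower_pos.
  have mR : (0 < INR m)%R by apply: lt_0_INR; apply/ltP.
  have e : INR m = Rpower (INR m ^ 3) (1 / 3).
    rewrite -(@Rpower_pow 3 _ mR) Rpower_mult.
    have -> : (INR 3 * (1 / 3) = 1)%R by rewrite /=; field.
    by rewrite Rpower_1.
  rewrite e; apply: Rle_Rpower_l; first lra.
  split; first exact: pow_lt.
  have := @nat_le_R _ _ hm; rewrite !mult_INR /=; lra.
rewrite plus_INR; lra.
Qed.

Lemma cbrt N : exists m, m*m*m <= N /\ N < (m+1)*(m+1)*(m+1).
Proof.
elim: N => [|N [m [h1 h2]]]; first by exists 0.
case: (leqP ((m+1)*(m+1)*(m+1)) N.+1) => h.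
  exists (m+1); split => //.
  nia.
by exists m; split => //; lia.
Qed.

Theorem theorem12 (s k : nat) (hs : (0 < s)%N) (hk : (0 < k)%N)
    (hsk : (5 * s <= k)%N) :
  exists W : seq (seq nat),
    size W = 4%N /\ uniq W /\
    (forall w, w \in W -> is_multiperm (nseq k s) w) /\
    (forall w w', w \in W -> w' \in W -> w <> w' ->
       (INR (LCS w w') <=
          Rpower (2 * INR s ^ 2 * INR k) (1 / 3)
          + 5 / 3 * INR s
          + Rpower (INR s) (4 / 3) * Rpower (INR k) (- (1 / 3)))%R).
Proof.
have [m [hm1 hm2]] := cbrt (2*s*s*k).
have := @params s k m hs hsk hm1 hm2.
move=> /= [hb hc hk' ha [hbT hcT hTk]].
have [hsz huq hmp hL] := comb hs hb hc hk' ha hbT hcT hTk.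
exists (Wset s k ((m + (5 * s) %/ 3) %/ s) (m + (5 * s) %/ 3 - s.-1)).
split => //; split => //; split => //.
move=> w w' hw hw' ne.
have hq : 3 * ((5 * s) %/ 3) <= 5 * s by rewrite mulnC leq_divM.
apply: Rle_trans (real_bound hm1 hq).
exact: nat_le_R (hL _ _ hw hw' ne).
Qed.
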